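(* Let $\epsilon$ be a sequence to which Algorithm A (described below) is applied and let $\epsilon'$ be the output. Then for every position $i$, $\epsilon'_i\neq\epsilon_i$ if and only if $i-2$ is an original occurrence of $p$, a transient occurrence of $p$, or an original occurrence of $q$.
   Context: The reduction of an integer word replaces each occurrence of its $k$-th smallest distinct value by $k-1$; a consecutive pattern $\underline{p_1p_2p_3p_4}$ occurs in a sequence at position $i$ if the reduction of its entries in positions $i,\dots,i+3$ equals $p_1p_2p_3p_4$. Let $p=\underline{0102}$ and $q=\underline{0112}$. Algorithm A, on input an integer sequence $\mathrm{seq}=\epsilon_1\cdots\epsilon_n$: let $E_p$, $E_q$ be the sets of positions of occurrences of $p$, resp. $q$, in the input sequence; set $\mathrm{last}:=$ null. For $i=1,2,\dots,n$ in order: let $N_p,N_q$ be the sets of positions of occurrences of $p$, resp. $q$, in the current sequence. If $i-2\in E_p$: set $\mathrm{last}:=\mathrm{seq}[i]$ and $\mathrm{seq}[i]:=\mathrm{seq}[i-1]$. Else if $i-2\in E_q$: set $\mathrm{last}:=\mathrm{seq}[i]$ and $\mathrm{seq}[i]:=\mathrm{seq}[i-2]$. Else if $i-2\in N_p$ or $i-2\in N_q$: swap the values of $\mathrm{seq}[i]$ and $\mathrm{last}$. Output $\mathrm{seq}$. With $\epsilon$ the input and $\epsilon'$ the output: position $i$ is an original occurrence of $p$ if $\epsilon_i=\epsilon_{i+2}$ and $\epsilon_i<\epsilon_{i+1}<\epsilon_{i+3}$; an original occurrence of $q$ if $\epsilon_i<\epsilon_{i+1}=\epsilon_{i+2}<\epsilon_{i+3}$;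 a transient occurrence of $p$ if it is not an original occurrence of $p$ but $\epsilon'_i=\epsilon_{i+2}$ and $\epsilon'_i<\epsilon_{i+1}<\epsilon_{i+3}$. *)

(* Defs.v *)
(* Sequences are [seq int], positions are 1-indexed. *)
From mathcomp Require Import all_boot all_order all_algebra.
Set Implicit Arguments. Unset Strict Implicit. Unset Printing Implicit Defensive.
Import Order.TTheory GRing.Theory Num.Theory.

Definition at_pos (s : seq int) (i : nat) : int := nth 0%R s i.-1.
Definition set_pos (s : seq int) (i : nat) (v : int) : seq int :=
  set_nth 0%R s i.-1 v.

(* reduction: each occurrence of the k-th smallest distinct value becomes k-1,
   i.e. x is replaced by the number of distinct values of w smaller than x *)
Definition reduction (w : seq int) : seq nat :=
  map (fun x => count (fun y => (y < x)%R) (undup w)) w.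

Definition occurs (pat : seq nat) (s : seq int) (j : nat) : bool :=
  [&& 1 <= j, j + 3 <= size s & reduction (take 4 (drop j.-1 s)) == pat].

Definition pat_p : seq nat := [:: 0; 1; 0; 2].
Definition pat_q : seq nat := [:: 0; 1; 1; 2].

(* one step (index i) of Algorithm A; e is the original input,
   the state is the current sequence together with the variable last
   (None = null). *)
Definition stepA (e : seq int) (st : seq int * option int) (i : nat)
  : seq int * option int :=
  let: (s, last) := st in
  if occurs pat_p e (i - 2) then
    (set_pos s i (at_pos s i.-1), Some (at_pos s i))
  else if occurs pat_q e (i - 2) then
    (set_pos s i (at_pos s (i - 2)), Some (at_pos s i))
  else if occurs pat_p s (i - 2) || occurs pat_q s (i - 2) then
    match last with
    | Some l => (set_pos s i l, Some (at_pos s i))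
    | None => (s, None) (* unreachable *)
    end
  else (s, last).

Definition algA (e : seq int) : seq int :=
  (foldl (stepA e) (e, None) (iota 1 (size e))).1.

Definition orig_occ_p (e : seq int) (i : nat) : Prop :=
  [/\ 1 <= i, i + 3 <= size e,
      at_pos e i = at_pos e (i + 2) &
      (at_pos e i < at_pos e (i + 1) < at_pos e (i + 3))%R].

Definition orig_occ_q (e : seq int) (i : nat) : Prop :=
  [/\ 1 <= i, i + 3 <= size e &
      (at_pos e i < at_pos e (i + 1))%R /\
      at_pos e (i + 1) = at_pos e (i + 2) /\
      (at_pos e (i + 2) < at_pos e (i + 3))%R].

Definition trans_occ_p (e e' : seq int) (i : nat) : Prop :=
  [/\ 1 <= i, i + 3 <= size e, ~ orig_occ_p e i,
      at_pos e' i = at_pos e (i + 2) &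
      (at_pos e' i < at_pos e (i + 1) < at_pos e (i + 3))%R].

(* Main.v *)
Require Import Defs.
From mathcomp Require Import all_boot all_order all_algebra.
From mathcomp Require Import zify.
Set Implicit Arguments. Unset Strict Implicit. Unset Printing Implicit Defensive.
Import Order.TTheory GRing.Theory Num.Theory.
Local Open Scope ring_scope.


Lemma count_lt_strict (l : seq int) (x y : int) :
  x < y -> x \in l -> (count (fun z : int => (z < x)%R) l < count (fun z : int => (z < y)%R) l)%N.
Proof.
move=> xy; elim: l => [|z l IH] //=; rewrite inE => /orP[/eqP <-|xl].
  rewrite ltxx xy add0n add1n ltnS; apply: sub_count => w /= wx.
  exact: lt_trans wx xy.
have := IH xl; case: (ltP z x) => zx /=; last by case: (z < y) => /= H; lia.
by rewrite (lt_trans zx xy) /= => H; lia.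
Qed.

Lemma count_le_mono (l : seq int) (x y : int) :
  y <= x -> (count (fun z : int => (z < y)%R) l <= count (fun z : int => (z < x)%R) l)%N.
Proof. move=> yx; apply: sub_count => w /= wy; exact: lt_le_trans wy yx. Qed.

Definition rk (w : seq int) x := count (fun y : int => y < x) (undup w).
Arguments rk : simpl never.
Lemma redE w : reduction w = map (rk w) w. Proof. by []. Qed.

Lemma rk_lt w x y : (rk w x < rk w y)%N -> x < y.
Proof. move=> H; case: (ltP x y) => // yx; have := @count_le_mono (undup w) _ _ yx.
rewrite /rk in H; lia. Qed.

Lemma rk_eq w x y : x \in w -> y \in w -> rk w x = rk w y -> x = y.
Proof.
move=> xw yw H; case: (ltgtP x y) => // xy.
  have := count_lt_strict (l := undup w) xy; rewrite mem_undup xw /rk in H * => /(_ isT); lia.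
have := count_lt_strict (l := undup w) xy; rewrite mem_undup yw /rk in H * => /(_ isT); lia.
Qed.

Lemma red4P a b c d :
  (reduction [:: a; b; c; d] == pat_p) = [&& a == c, a < b & b < d].
Proof.
apply/idP/idP.
  rewrite redE /pat_p /=.
  case/eqP=> ha hb hc hd.
  have Eac : a = c by apply: (rk_eq (w := [:: a; b; c; d])); rewrite ?inE ?eqxx ?orbT // ha hc.
  rewrite Eac eqxx /=; apply/andP; split; apply: (rk_lt (w := [:: a; b; c; d])).
    by rewrite hc hb.
  by rewrite hb hd.
case/and3P=> /eqP <- ab bd.
have ad := lt_trans ab bd.
rewrite /reduction /pat_p /= !inE eqxx /= (lt_eqF ab) (lt_eqF bd) (lt_eqF ad) /=.
idtac.
rewrite ?(gt_eqF ab) ?(gt_eqF bd) ?(gt_eqF ad) /=.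
by rewrite ?ltxx ?ab ?ad ?bd ?(lt_gtF ab) ?(lt_gtF ad) ?(lt_gtF bd).
Qed.

Lemma red4Q a b c d :
  (reduction [:: a; b; c; d] == pat_q) = [&& a < b, b == c & c < d].
Proof.
apply/idP/idP.
  rewrite redE /pat_q /=.
  case/eqP=> ha hb hc hd.
  have Ebc : b = c by apply: (rk_eq (w := [:: a; b; c; d])); rewrite ?inE ?eqxx ?orbT // hb hc.
  rewrite Ebc eqxx /=; apply/andP; split; apply: (rk_lt (w := [:: a; b; c; d])).
    by rewrite ha hc.
  by rewrite hc hd.
case/and3P=> ab /eqP <- bd.
have ad := lt_trans ab bd.
rewrite /reduction /pat_q /= !inE eqxx /= (lt_eqF ab) (lt_eqF bd) (lt_eqF ad) /=.
idtac.
rewrite ?(gt_eqF ab) ?(gt_eqF bd) ?(gt_eqF ad) /=.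
by rewrite ?ltxx ?ab ?ad ?bd ?(lt_gtF ab) ?(lt_gtF ad) ?(lt_gtF bd).
Qed.

Notation A := at_pos.

Definition oP (s : seq int) (b : nat) : Prop :=
  [/\ (0 < b)%N, (b.+3 <= size s)%N, A s b = A s b.+2, A s b < A s b.+1 & A s b.+1 < A s b.+3].
Definition oQ (s : seq int) (b : nat) : Prop :=
  [/\ (0 < b)%N, (b.+3 <= size s)%N, A s b < A s b.+1, A s b.+1 = A s b.+2 & A s b.+2 < A s b.+3].
Definition tP (e s : seq int) (b : nat) : Prop :=
  [/\ (0 < b)%N, (b.+3 <= size e)%N, ~ oP e b, A s b = A e b.+2 &
      A s b < A e b.+1 /\ A e b.+1 < A e b.+3].

Lemma take4 (s : seq int) b : (b.+4 <= size s)%N ->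
  take 4 (drop b s) = [:: nth 0 s b; nth 0 s b.+1; nth 0 s b.+2; nth 0 s b.+3].
Proof.
move=> h.
rewrite (drop_nth (0:int)); last lia.
rewrite (drop_nth (0:int) (n := b.+1)); last lia.
rewrite (drop_nth (0:int) (n := b.+2)); last lia.
rewrite (drop_nth (0:int) (n := b.+3)); last lia.
by rewrite /= take0.
Qed.

Lemma occPE s j : occurs pat_p s j <-> oP s j.
Proof.
rewrite /occurs /oP; case: j => [|b]; first by split => // -[].
rewrite addn3 /=; case: (ltnP b.+3 (size s)) => hs /=; last first.
  by split => // -[] _; lia.
rewrite take4 // red4P.
change (nth 0 s b) with (A s b.+1); change (nth 0 s b.+1) with (A s b.+2).
change (nth 0 s b.+2) with (A s b.+3); change (nth 0 s b.+3) with (A s b.+4).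
split.
  by case/and3P => /eqP h1 h2 h3; split.
by case=> _ _ -> h2 h3; rewrite eqxx h2 h3.
Qed.

Lemma occQE s j : occurs pat_q s j <-> oQ s j.
Proof.
rewrite /occurs /oQ; case: j => [|b]; first by split => // -[].
rewrite addn3 /=; case: (ltnP b.+3 (size s)) => hs /=; last first.
  by split => // -[] _; lia.
rewrite take4 // red4Q.
change (nth 0 s b) with (A s b.+1); change (nth 0 s b.+1) with (A s b.+2).
change (nth 0 s b.+2) with (A s b.+3); change (nth 0 s b.+3) with (A s b.+4).
split.
  by case/and3P => h1 /eqP h2 h3; split.
by case=> _ _ h1 h2 h3; rewrite h1 h2 eqxx h3.
Qed.

Lemma origPE e b : orig_occ_p e b <-> oP e b.
Proof.
rewrite /orig_occ_p /oP !addn3 !addn2 !addn1.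
by split; [case=> h1 h2 h3 /andP[h4 h5]; split | case=> h1 h2 h3 h4 h5; split => //; apply/andP].
Qed.
Lemma origQE e b : orig_occ_q e b <-> oQ e b.
Proof.
rewrite /orig_occ_q /oQ !addn3 !addn2 !addn1.
by split; [case=> h1 h2 [h3 [h4 h5]]; split | case=> h1 h2 h3 h4 h5; split].
Qed.
Lemma transE e s b : trans_occ_p e s b <-> tP e s b.
Proof.
rewrite /trans_occ_p /tP !addn3 !addn2 !addn1.
split.
  case=> h1 h2 h3 h4 /andP[h5 h6]; split => //; by move/origPE.
case=> h1 h2 h3 h4 [h5 h6]; split => //; [by move/origPE | by apply/andP].
Qed.

Record Inv (e : seq int) (m : nat) (s : seq int) (last : option int) : Prop := {
 i_sz : size s = size e;
 i_U : forall k, (m < k)%N -> A s k = A e k;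
 i_12 : forall k, (k <= 2)%N -> A s k = A e k;
 i_R : forall b, (b.+2 <= m)%N -> (A s b.+2 <> A e b.+2 <-> oP e b \/ tP e s b \/ oQ e b);
 i_VA : forall b, (b.+2 <= m)%N -> oP e b -> A s b.+2 = A e b.+1;
 i_VB : forall b, (b.+2 <= m)%N -> oQ e b -> A s b.+2 < A e b.+2;
 i_VC : forall b, (b.+2 <= m)%N -> tP e s b -> A s b.+2 = A e b;
 i_NA : forall b, (b.+1 <= m)%N -> A s b.+1 <> A e b.+1 -> A s b = A e b;
 i_L : forall k, (k <= m)%N -> A s k <> A e k ->
        (forall k', (k < k')%N -> (k' <= m)%N -> A s k' = A e k') -> last = Some (A e k) }.

Lemma ch_up e m s last p : Inv e m s last -> (p <= m)%N -> A s p <> A e p ->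
  A e p < A e p.+1.
Proof.
move=> I hp hne; case: p hp hne => [|[|[|c]]] hp hne; try by case: hne; apply: (i_12 I).
have := (i_R I (b := c.+1) hp).1 hne.
case=> [[h0 h1 h2 h3 h4]|[[h0 h1 h5 h2 [h3 h4]]|[h0 h1 h2 h3 h4]]]; lia.
Qed.

Lemma Inv0 e : Inv e 0 e None.
Proof. by split => //; move=> *; lia. Qed.

Lemma A_set (s : seq int) i v k : (1 < i)%N ->
  A (set_pos s i v) k = if k == i then v else A s k.
Proof.
rewrite /at_pos /set_pos nth_set_nth /=; case: i => // i hi.
by case: k => [|k] //=; case: i hi.
Qed.

Lemma tP_set e s i v c : (1 < i)%N -> c != i -> tP e (set_pos s i v) c <-> tP e s c.
Proof. by move=> hi hc; rewrite /tP A_set // (negbTE hc). Qed.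

Lemma upd e b s last v : Inv e b.+1 s last -> (0 < b)%N -> (b.+2 <= size e)%N ->
  v <> A e b.+2 ->
  (oP e b \/ tP e s b \/ oQ e b) ->
  (oP e b -> v = A e b.+1) -> (oQ e b -> v < A e b.+2) -> (tP e s b -> v = A e b) ->
  A s b.+1 = A e b.+1 ->
  Inv e b.+2 (set_pos s b.+2 v) (Some (A e b.+2)).
Proof.
move=> I hb hsz hv hR hA hB hC hN.
have hi : (1 < b.+2)%N by lia.
have AS k : A (set_pos s b.+2 v) k = (if k == b.+2 then v else A s k) by apply: A_set.
split.
- rewrite size_set_nth (i_sz I); lia.
- move=> k hk; rewrite AS ifN; [apply: (i_U I); lia | apply/eqP; lia].
- move=> k hk; rewrite AS ifN; [exact: (i_12 I) | apply/eqP; lia].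
- move=> c hc; case: (eqVneq c b) => [->|hcb].
    rewrite AS eqxx (tP_set _ _ _ hi); last by apply/eqP; lia.
    by split.
  rewrite AS ifN; last by apply/eqP; lia.
  rewrite (tP_set _ _ _ hi); last by apply/eqP; lia.
  have hc' : (c.+2 <= b.+1)%N by lia.
  exact: (i_R I hc').
- move=> c hc; case: (eqVneq c b) => [-> /hA|hcb hP]; first by rewrite AS eqxx.
  rewrite AS ifN; last by apply/eqP; lia.
  apply: (i_VA I) => //; lia.
- move=> c hc; case: (eqVneq c b) => [-> /hB|hcb hP]; first by rewrite AS eqxx.
  rewrite AS ifN; last by apply/eqP; lia.
  apply: (i_VB I) => //; lia.
- move=> c hc; case: (eqVneq c b) => [->|hcb].
    rewrite (tP_set _ _ _ hi); last by apply/eqP; lia.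
    by rewrite AS eqxx; move/hC.
  rewrite (tP_set _ _ _ hi); last by apply/eqP; lia.
  move=> hP; rewrite AS ifN; last by apply/eqP; lia.
  apply: (i_VC I) => //; lia.
- move=> c hc; case: (eqVneq c b.+1) => [-> _|hcb].
    by rewrite AS ifN //; apply/eqP; lia.
  rewrite AS ifN; last by apply/eqP; lia.
  rewrite AS ifN; last by apply/eqP; lia.
  apply: (i_NA I); lia.
- move=> k hk hne H; case: (eqVneq k b.+2) => [->//|hkb].
  have := H b.+2; rewrite AS eqxx => /(_ _ (leqnn _)) hh.
  by case: hv; apply: hh; lia.
Qed.

Lemma keep e m s last : Inv e m s last -> (m.+1 <= size e)%N ->
  (forall b, m.+1 = b.+2 -> ~ (oP e b \/ tP e s b \/ oQ e b)) -> Inv e m.+1 s last.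
Proof.
move=> I hsz H.
have hU : A s m.+1 = A e m.+1 by apply: (i_U I).
split.
- exact: (i_sz I).
- move=> k hk; apply: (i_U I); lia.
- exact: (i_12 I).
- move=> c hc; case: (eqVneq c.+2 m.+1) => [hcm|/eqP hcm].
    by rewrite hcm hU; split => [//|/(H _ (esym hcm))].
  have hc' : (c.+2 <= m)%N by lia.
  exact: (i_R I hc').
- move=> c hc hP; case: (eqVneq c.+2 m.+1) => [hcm|/eqP hcm].
    by case: (H _ (esym hcm)); left.
  apply: (i_VA I) => //; lia.
- move=> c hc hP; case: (eqVneq c.+2 m.+1) => [hcm|/eqP hcm].
    by case: (H _ (esym hcm)); right; right.
  apply: (i_VB I) => //; lia.
- move=> c hc hP; case: (eqVneq c.+2 m.+1) => [hcm|/eqP hcm].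
    by case: (H _ (esym hcm)); right; left.
  apply: (i_VC I) => //; lia.
- move=> c hc; case: (eqVneq c.+1 m.+1) => [hcm|/eqP hcm].
    by rewrite hcm hU.
  apply: (i_NA I); lia.
- move=> k hk hne H'; case: (eqVneq k m.+1) => [hkm|/eqP hkm].
    by case: hne; rewrite hkm.
  apply: (i_L I) => //; first lia.
  move=> k' h1 h2; apply: H' => //; lia.
Qed.

Lemma step e m s last : Inv e m s last -> (m.+1 <= size e)%N ->
  Inv e m.+1 (stepA e (s, last) m.+1).1 (stepA e (s, last) m.+1).2.
Proof.
case: m => [|[|j]] I hsz.
- apply: keep => // b [] hb; subst b; case=> [[]|[[]|[]]] //.
- apply: keep => // b [] hb; subst b; case=> [[]|[[]|[]]] //.
- rewrite /stepA. rewrite (_ : j.+3 - 2 = j.+1)%N //.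
  have U3 : A s j.+3 = A e j.+3 by apply: (i_U I).
  have U4 : A s j.+4 = A e j.+4 by apply: (i_U I).
  case: (boolP (occurs pat_p e j.+1)) => [hPb|hnP].
    have hP := (occPE _ _).1 hPb.
    have hS1 : A s j.+2 = A e j.+2.
      case: (boolP (A s j.+2 == A e j.+2)) => [/eqP//|/eqP hne].
      have := ch_up I (leqnn _) hne; case: hP => *; lia.
    rewrite /= hS1 U3.
    case: hP => h0 h1 h2 h3 h4.
    apply: (upd I) => //; first lia. 
    + by left; split.
    + by case=> *; lia.
    + by case=> _ _ []; split.
  case: (boolP (occurs pat_q e j.+1)) => [hQb|hnQ].
    have hQ := (occQE _ _).1 hQb.
    have hv : A s j.+1 < A e j.+3.
      case: (boolP (A s j.+1 == A e j.+1)) => [/eqP->|/eqP hne].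
        by case: hQ => *; lia.
      case: j I hsz U3 U4 hnP hQ hne hQb => [|c] I hsz U3 U4 hnP hQ hne hQb.
        by case: hne; apply: (i_12 I).
      case/(i_R I (b := c) (ltnW (leqnn _))): (hne).
      * move=> hP; have := i_VA I (ltnW (leqnn _)) hP.
        by case: hP => *; case: hQ => *; lia.
      case.
      * move=> hT; have := i_VC I (ltnW (leqnn _)) hT.
        case: (boolP (A s c == A e c)) => [/eqP|/eqP hne'].
          by case: hT => ? ? ? ? []; case: hQ => *; lia.
        have hcle : (c <= c.+3)%N by lia.
        have := ch_up I hcle hne'.
        by case: hT => ? ? ? ? []; case: hQ => *; lia.
      * move=> hQ'; have := i_VB I (ltnW (leqnn _)) hQ'.
        by case: hQ' => *; case: hQ => *; lia.
    have hS1 : A s j.+2 = A e j.+2.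
      case: (boolP (A s j.+2 == A e j.+2)) => [/eqP//|/eqP hne].
      have := ch_up I (leqnn _) hne; case: hQ => *; lia.
    rewrite /= U3.
    case: (hQ) => h0 h1 h2 h3 h4.
    apply: (upd I) => //; first lia.
    + by right; right.
    + by move/occPE; rewrite (negbTE hnP).
    + by case=> *; lia.
  case: (boolP (occurs pat_p s j.+1 || occurs pat_q s j.+1)) => [hor|hnor]; last first.
    rewrite /=.
    apply: keep => // b [] hb; subst b.
    case=> [/occPE hP|[hT|/occQE hQ]]; [by case/negP: hnP|idtac|by case/negP: hnQ].
    case: (boolP (A s j.+2 == A e j.+2)) => [/eqP hS1|/eqP hne].
      case/negP: hnor; apply/orP; left; apply/occPE.
      by case: hT => h0 h1 h2 h3 [h4 h5]; split; rewrite ?(i_sz I) ?hS1 ?U3 ?U4.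
    have hS0 := i_NA I (b := j.+1) (leqnn _) hne.
    case/negP: hnP; apply/occPE.
    by case: hT => h0 h1 h2 h3 [h4 h5]; split => //; lia.
  have hw : oP s j.+1 \/ oQ s j.+1.
    by case/orP: hor => [/occPE|/occQE]; [left|right].
  have hS1 : A s j.+2 = A e j.+2.
    case: (boolP (A s j.+2 == A e j.+2)) => [/eqP//|/eqP hne].
    have hS0 := i_NA I (b := j.+1) (leqnn _) hne.
    case/(i_R I (b := j) (leqnn _)): (hne).
    * move=> hP; have := i_VA I (leqnn _) hP.
      by case: hw => -[] *; lia.
    case.
    * move=> hT; have := i_VC I (leqnn _) hT.
      case: hw => -[]; rewrite ?U3 ?U4 => *; first by case: hT => ? ? ? ? []; lia.
      case: (boolP (A s j == A e j)) => [/eqP|/eqP hne'].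
        by case: hT => ? ? ? ? []; lia.
      have hcle : (j <= j.+2)%N by lia.
      have := ch_up I hcle hne'.
      by case: hT => ? ? ? ? []; lia.
    * move=> hQ'; have := i_VB I (leqnn _) hQ'.
      by case: hQ' => *; case: hw => -[] *; lia.
  have hS0 : A s j.+1 <> A e j.+1.
    move=> hS0; have hsz' := i_sz I; case: hw => -[] h0 h1; rewrite ?U3 ?U4 hS0 hS1 => *.
      by case/negP: hnP; apply/occPE; split => //; lia.
    by case/negP: hnQ; apply/occQE; split => //; lia.
  have hup := ch_up I (ltnW (leqnn _)) hS0.
  have hP : [/\ A s j.+1 = A e j.+3, A s j.+1 < A e j.+2 & A e j.+2 < A e j.+4].
    case: hw => -[] h0 h1; rewrite ?U3 ?U4 hS1 => *; first by split.
    by case/negP: hnQ; apply/occQE; split; rewrite -?(i_sz I) //; lia.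
  have hL : last = Some (A e j.+1).
    apply: (i_L I) => // k' h1 h2.
    by have -> : k' = j.+2 by lia.
  rewrite hL /= U3.
  case: hP => p1 p2 p3.
  have hsz' : (j.+4 <= size e)%N by case: hw => -[] _; rewrite (i_sz I).
  apply: (upd I) => //; first lia.
  + by right; left; split => //; move/occPE; apply/negP.
  + by move/occPE; rewrite (negbTE hnP).
  + by move/occQE; rewrite (negbTE hnQ).
Qed.

Lemma fold_inv e m : (m <= size e)%N ->
  Inv e m (foldl (stepA e) (e, None) (iota 1 m)).1 (foldl (stepA e) (e, None) (iota 1 m)).2.
Proof.
elim: m => [|m IH] hm; first exact: Inv0.
rewrite -addn1 iotaD foldl_cat /= add1n.
move: (IH (ltnW hm)); case: (foldl _ _ _) => s last /= I.
rewrite addn1; exact: (step I hm).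
Qed.

Theorem lemma6' (e : seq int) (i : nat) :
  (1 <= i <= size e)%N ->
  (at_pos (algA e) i <> at_pos e i <->
   orig_occ_p e (i - 2) \/ trans_occ_p e (algA e) (i - 2) \/ orig_occ_q e (i - 2)).
Proof.
case/andP=> h1 h2.
have I := fold_inv (leqnn (size e)).
rewrite /algA.
case: i h1 h2 => [|[|b]] // h1 h2.
  rewrite (i_12 I) //; split => // -[[]|[[]|[]]] //.
rewrite (_ : b.+2 - 2 = b)%N; last by rewrite subSS subSS subn0.
rewrite origPE origQE transE.
exact: (i_R I h2).
Qed.

Local Close Scope ring_scope.

Theorem lemma6 (e : seq int) (i : nat) :
  1 <= i <= size e ->
  (at_pos (algA e) i <> at_pos e i <->
   orig_occ_p e (i - 2) \/ trans_occ_p e (algA e) (i - 2) \/ orig_occ_q e (i - 2)).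
Proof. exact: lemma6'. Qed.
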